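(* Let $T>0$, $\gamma\in(0,T]$, $\mathcal{T}=[0,T]$, and let $\mathcal{D}$ be the set of Lebesgue measurable functions $\delta:\mathcal{T}\to[-1,1]$ with $\int_{\mathcal{T}}|\delta(t)|\,\mathrm{d}t\le\gamma$. Let $\mathcal{D}^+_\downarrow\subseteq\mathcal{D}$ be the set of those $\delta\in\mathcal{D}$ that are nonnegative, nonincreasing and left-continuous. Let $\eta^+,\eta^-\in(0,1]$ and, for $x^b\in\mathbb{R}$, $x^r\ge 0$, $y_0\in\mathbb{R}$, $\delta\in\mathcal{D}$, $t\in\mathcal{T}$, let $$y(x^b,x^r,\delta,y_0,t)=y_0+\int_0^t\Big(\eta^+\big[x^b+\delta(s)x^r\big]^+-\tfrac{1}{\eta^-}\big[x^b+\delta(s)x^r\big]^-\Big)\,\mathrm{d}s .$$ Then for any $x^b\in\mathbb{R}$, $y_0\in\mathbb{R}$ and any $x^r\ge 0$, $$\max_{\delta\in\mathcal{D},\,t\in\mathcal{T}} y(x^b,x^r,\delta,y_0,t)=\max_{\delta\in\mathcal{D}^+_\downarrow,\,t\in\mathcal{T}} y(x^b,x^r,\delta,y_0,t).$$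
   Context: $[a]^+=\max\{a,0\}$ and $[a]^-=\max\{-a,0\}$. Here $x^b$ is the base charging power of a battery, $x^r$ the reserve capacity offered for frequency regulation, $\delta$ a normalized frequency-deviation trajectory, $\eta^\pm$ charging/discharging efficiencies, and $y$ the state-of-charge. *)

(* Defs.v *)
From HB Require Import structures.
From mathcomp Require Import all_boot all_order all_algebra.
From mathcomp Require Import all_classical all_reals all_analysis.
Set Implicit Arguments. Unset Strict Implicit. Unset Printing Implicit Defensive.
Import Order.TTheory GRing.Theory Num.Theory.
Import numFieldNormedType.Exports.
Local Open Scope classical_set_scope.
Local Open Scope ring_scope.

(* The measurable space of Lebesgue measurable subsets of R
   (the completion / Caratheodory sigma-algebra of the Lebesgue measure). *)
Definition LebR (R : realType) :=
  caratheodory_type (R:=R) (@wlength R idfun)^*%mu.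

Definition lebm (R : realType) : set (LebR R) -> \bar R :=
  @completed_lebesgue_measure R.

Definition leb_measurable (R : realType) (A : set R) (f : R -> R) : Prop :=
  @measurable_fun _ _ (LebR R) R A f.

Definition ppart (R : realType) (a : R) : R := Num.max a 0.
Definition npart (R : realType) (a : R) : R := Num.max (- a) 0.

Definition inD (R : realType) (T gamma : R) (d : R -> R) : Prop :=
  leb_measurable `[0, T] d /\
  (forall t : R, 0 <= t <= T -> -1 <= d t <= 1) /\
  (\int[@lebm R]_(x in (`[0%R, T] : set R)) (`|d x|)%:E <= gamma%:E)%E.

Definition inDpd (R : realType) (T gamma : R) (d : R -> R) : Prop :=
  inD T gamma d /\
  (forall t : R, 0 <= t <= T -> 0 <= d t) /\
  (forall s t : R, 0 <= s -> s <= t -> t <= T -> d t <= d s) /\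
  (forall t : R, 0 < t <= T -> d x @[x --> t^'-] --> d t).

Definition soc (R : realType) (etap etam xb xr : R) (d : R -> R) (y0 t : R) : R :=
  y0 + Rintegral (@lebm R) `[0, t]
         (fun s => etap * ppart (xb + d s * xr) - etam^-1 * npart (xb + d s * xr)).

Definition is_max (R : realType) (S : set R) (v : R) : Prop :=
  S v /\ (forall w, S w -> w <= v).

(* Main.v *)
Require Import Defs.
From HB Require Import structures.
From mathcomp Require Import all_boot all_order all_algebra.
From mathcomp Require Import all_classical all_reals all_analysis.
From mathcomp Require Import measurable_realfun.
From mathcomp Require Import ring lra.
Import Order.TTheory GRing.Theory Num.Theory.
Import numFieldNormedType.Exports.
Local Open Scope classical_set_scope.
Local Open Scope ring_scope.

Section H.
Context {R : realType}.

Lemma mLeb (A : set R) : measurable (A : set (measurableTypeR R)) -> measurable (A : set (LebR R)).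
Proof. move=> mA. exact: sub_caratheodory. Qed.

Lemma mLeb_itv (i : interval R) : measurable ([set` i] : set (LebR R)).
Proof. apply: mLeb. exact: measurable_itv. Qed.

Lemma lebmE (A : set R) : lebm A = lebesgue_measure A.
Proof. reflexivity. Qed.

Lemma lebm_cc (a b : R) : a <= b -> lebm (`[a, b] : set R) = (b - a)%:E.
Proof. move=> ab. rewrite lebmE lebesgue_measure_itv /= lte_fin.
rewrite le_eqVlt in ab; case/orP: ab => [/eqP->|ab]; first by rewrite ltxx subrr.
by rewrite ab EFinB. Qed.

Lemma mfun_Leb (D : set R) (f : R -> R) : measurable_fun (setT : set (measurableTypeR R)) f ->
  measurable_fun (D : set (LebR R)) f.
Proof.
move=> mf mD Y mY. apply: measurableI => //. apply: mLeb.
have := mf measurableT Y mY. by rewrite setTI.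
Qed.
End H.

Section Dstar.
Context {R : realType}.
Variables (T gamma : R).
Hypotheses (hT : 0 < T) (hg0 : 0 < gamma) (hgT : gamma <= T).

Definition dstar : R -> R := \1_(`]-oo, gamma] : set R).

Lemma dstarE x : dstar x = if x <= gamma then 1 else 0.
Proof. rewrite /dstar indicE; rewrite (_ : (x \in _) = (x <= gamma)); first by case: (x <= gamma).
by apply/idP/idP; rewrite inE /= in_itv. Qed.

Lemma int_dstar : (\int[@lebm R]_(x in `[0%R, T]) (dstar x)%:E = gamma%:E)%E.
Proof.
rewrite integral_indic; last 2 first.
- exact: mLeb_itv.
- exact: mLeb_itv.
have E : (`]-oo, gamma] `&` `[0, T] : set R) = `[0, gamma]%classic.
  apply/seteqP; split => x /=; rewrite !in_itv /=.
    by case=> -> /andP[-> _].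
  by move=> /andP[x0 xg]; split => //; rewrite x0 (le_trans xg hgT).
rewrite E (_ : gamma%:E = lebm (`[0, gamma] : set R)); first by [].
by rewrite lebm_cc ?subr0 // ltW.
Qed.

Lemma dstar_inDpd : inDpd T gamma dstar.
Proof.
split; [split; [|split]|split; [|split]].
- apply: mfun_Leb. apply: measurable_indic. exact: measurable_itv.
- by move=> t _; rewrite dstarE; case: ifP => _; apply/andP; split; rewrite ?lexx ?ler01 ?lerN10 // ?oppr_le0 ?ler01.
- rewrite (eq_integral (fun x : LebR R => (dstar x)%:E)); last first.
    by move=> x _; rewrite dstarE; case: ifP => _; rewrite ?normr1 ?normr0.
  by rewrite int_dstar.
- by move=> t _; rewrite dstarE; case: ifP.
- move=> s t s0 st tT; rewrite !dstarE.
  case: ifP => tg; case: ifP => sg //.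
  by rewrite (le_trans st tg) in sg.
- move=> t /andP[t0 tT].
  have H : \forall x \near t^'-, dstar x = dstar t.
    have [tg|gt] := leP t gamma.
      near=> x.
      have xt : x < t by near: x; exact: nbhs_left_lt.
      by rewrite !dstarE tg (le_trans (ltW xt) tg).
    near=> x.
    have xg : gamma < x by near: x; exact: nbhs_left_gt.
    by rewrite !dstarE !leNgt gt xg.
  exact: (cvg_near_cst (dstar t) H).
Unshelve. all: by end_near.
Qed.
End Dstar.

Section G.
Variables (R : realType) (etap etam xb xr : R).
Definition gg (u : R) : R := etap * ppart (xb + u * xr) - etam^-1 * npart (xb + u * xr).

Lemma gg_meas : measurable_fun (setT : set R) gg.
Proof.
rewrite /gg /ppart /npart.
apply: measurable_funB; apply: measurable_funM => //;
  apply: measurable_maxr => //; try apply: measurable_funN;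
  apply: measurable_funD => //; apply: measurable_funM => //.
Qed.


Lemma socE d y0 t : soc etap etam xb xr d y0 t = y0 + Rintegral (@lebm R) `[0, t] (fun s => gg (d s)).
Proof. by []. Qed.

Lemma soc_ub (T gamma : R) d t y0 A B : 0 <= gamma -> inD T gamma d -> 0 <= t <= T ->
  0 <= A -> 0 <= B ->
  (forall u, -1 <= u <= 1 -> gg u <= B + A * `|u|) ->
  soc etap etam xb xr d y0 t <= y0 + (B * T + A * gamma).
Proof.
move=> g0 [md [dr dint]] /andP[t0 tT] A0 B0 hg.
rewrite socE lerD2l.
have mT : measurable (`[0,T] : set (LebR R)) := mLeb_itv _.
have mt : measurable (`[0,t] : set (LebR R)) := mLeb_itv _.
have sub : (`[0,t] : set R) `<=` `[0,T].
  by move=> x /=; rewrite !in_itv /= => /andP[x0 xt]; rewrite x0 (le_trans xt tT).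
have mdt : measurable_fun (`[0,t] : set (LebR R)) d := measurable_funS mT sub md.
have mg : measurable_fun (`[0,t] : set (LebR R)) (fun s => gg (d s)) :=
  measurableT_comp (gg_meas) mdt.
have mabs : measurable_fun (`[0,T] : set (LebR R)) (fun s => `|d s|) :=
  measurableT_comp (@normr_measurable R setT) md.
have H : (\int[@lebm R]_(x in `[0%R,t]) (gg (d x))%:E <= (B*T + A*gamma)%:E)%E.
  rewrite integralE.
  set Ip := (X in (X - _)%E).
  set In := (X in (_ - X)%E).
  have In0 : (0 <= In)%E by apply: integral_ge0 => x _; exact: funeneg_ge0.
  apply: (le_trans (leeB (lexx Ip) In0)).
  rewrite sube0 /Ip.
  apply: (@le_trans _ _ (\int[@lebm R]_(x in `[0%R,t]) (B + A * `|d x|)%:E)%E).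
    apply: ge0_le_integral => //.
    - apply: measurable_funepos; exact/measurable_EFinP.
    - apply/measurable_EFinP; apply: measurable_funS mT sub _.
      apply: measurable_funD; first exact: measurable_cst.
      apply: measurable_funM; first exact: measurable_cst.
      exact: mabs.
    - move=> x tx; rewrite funeposE ge_max; apply/andP; split.
        rewrite lee_fin; apply: hg; apply: dr.
        by move: (sub x tx) => /=; rewrite in_itv.
      by rewrite lee_fin addr_ge0 // mulr_ge0.
  apply: le_trans.
    apply: (@ge0_subset_integral _ _ _ (@lebm R) _ _ mt mT) => //.
    - apply/measurable_EFinP; apply: measurable_funD; first exact: measurable_cst.
      apply: measurable_funM; first exact: measurable_cst.
      exact: mabs.
    - by move=> x _; rewrite lee_fin addr_ge0 // mulr_ge0.
  rewrite (eq_integral (fun x : LebR R => B%:E + A%:E * (`|d x|)%:E)%E); last first.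
    by move=> x _; rewrite EFinD EFinM.
  rewrite ge0_integralD; last 5 first.
  - exact: mT.
  - by move=> x _; rewrite lee_fin.
  - exact: measurable_cst.
  - by move=> x _; rewrite lee_fin mulr_ge0.
  - apply/measurable_EFinP; apply: measurable_funM; first exact: measurable_cst.
      exact: mabs.
  rewrite ge0_integralZl_EFin; last 4 first.
  - exact: mT.
  - by move=> x _; rewrite lee_fin.
  - exact/measurable_EFinP.
  - exact: A0.
  rewrite integral_cst // EFinD; apply: leeD.
    rewrite le_eqVlt; apply/orP; left; apply/eqP; rewrite EFinM.
    rewrite (_ : T%:E = lebm (`[0, T] : set R)); first by [].
    by rewrite lebm_cc ?subr0 // (le_trans t0 tT).
  rewrite EFinM; apply: lee_pmul => //.
  by apply: integral_ge0 => x _; rewrite lee_fin.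
rewrite /Rintegral.
move: H; case: (\int[@lebm R]_(x in `[0%R,t]) (gg (d x))%:E)%E => [r| |] //=.
move=> _; apply: addr_ge0; apply: mulr_ge0 => //; exact: le_trans tT.
Qed.

Hypotheses (hetap : 0 < etap <= 1) (hetam : 0 < etam <= 1) (hxr : 0 <= xr).

Lemma gg_nonneg u : 0 <= xb + u * xr -> gg u = etap * (xb + u * xr).
Proof.
move=> h; rewrite /gg /ppart /npart max_l // max_r; last by rewrite oppr_le0.
by rewrite mulr0 subr0.
Qed.

Lemma gg_le_lin u : gg u <= etap * (xb + u * xr).
Proof.
have [h|h] := leP 0 (xb + u * xr); first by rewrite gg_nonneg.
rewrite /gg /ppart /npart max_r ?(ltW h) // max_l; last by rewrite oppr_ge0 ltW.
case/andP: hetap => p0 p1; case/andP: hetam => m0 m1.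
have i1 : 1 <= etam^-1 by rewrite invf_ge1.
set a := xb + u * xr in h *.
nra.
Qed.

Lemma soc_dstar_le (T gamma : R) y0 t : 0 <= t <= gamma ->
  soc etap etam xb xr (dstar gamma) y0 t = y0 + t * gg 1.
Proof.
move=> /andP[t0 tg]; rewrite socE; congr (_ + _).
rewrite (@eq_Rintegral _ _ _ _ _ (fun _ => gg 1)); last first.
  by move=> x; rewrite inE /= in_itv /= => /andP[_ xt]; rewrite dstarE (le_trans xt tg).
rewrite Rintegral_cst; last exact: mLeb_itv.
rewrite mulrC; congr (_ * _).
have E : lebm (`[0, t] : set R) = t%:E by rewrite lebm_cc // subr0.
transitivity (fine (t%:E)); last by [].
by rewrite -E.
Qed.

Lemma soc_dstar_T (T gamma : R) y0 : 0 < T -> 0 < gamma -> gamma <= T -> 0 <= xb ->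
  soc etap etam xb xr (dstar gamma) y0 T = y0 + etap * (xb * T + xr * gamma).
Proof.
move=> hT hg0 hgT xb0.
case/andP: hetap => p0 p1.
rewrite socE; congr (_ + _).
rewrite /Rintegral.
rewrite (eq_integral (fun x : LebR R => ((etap*xb)%:E + (etap*xr)%:E * (dstar gamma x)%:E)%E)); last first.
  move=> x _; rewrite gg_nonneg; last first.
    by rewrite dstarE; case: ifP => _; rewrite ?mul1r ?mul0r ?addr0 // addr_ge0.
  by rewrite -EFinM -EFinD; congr (_%:E); ring.
have mT : measurable (`[0,T] : set (LebR R)) := mLeb_itv _.
rewrite ge0_integralD; last 5 first.
- exact: mT.
- by move=> x _; rewrite lee_fin mulr_ge0 // ltW.
- exact: measurable_cst.
- move=> x _; rewrite -EFinM lee_fin; apply: mulr_ge0; [apply: mulr_ge0 => //; exact: ltW|by rewrite dstarE; case: ifP].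
- apply/measurable_EFinP; apply: measurable_funM; first exact: measurable_cst.
  apply: mfun_Leb; apply: measurable_indic; exact: measurable_itv.
rewrite ge0_integralZl_EFin; last 4 first.
- exact: mT.
- by move=> x _; rewrite lee_fin dstarE; case: ifP.
- apply/measurable_EFinP; apply: mfun_Leb; apply: measurable_indic; exact: measurable_itv.
- by rewrite mulr_ge0 // ltW.
rewrite int_dstar // integral_cst //.
have E : lebm (`[0, T] : set R) = T%:E by rewrite lebm_cc ?subr0 // ltW.
transitivity (fine ((etap * xb)%:E * T%:E + (etap * xr)%:E * gamma%:E)%E).
  by rewrite -E.
rewrite -!EFinM -EFinD /=.
by rewrite mulrDr !mulrA.
Qed.
End G.

Theorem lemma2 (R : realType) (T gamma etap etam : R)
  (hT : 0 < T) (hgamma : 0 < gamma <= T)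
  (hetap : 0 < etap <= 1) (hetam : 0 < etam <= 1)
  (xb y0 xr : R) (hxr : 0 <= xr) :
  exists v : R,
    is_max [set y | exists d t, inD T gamma d /\ 0 <= t <= T /\
                                y = soc etap etam xb xr d y0 t] v /\
    is_max [set y | exists d t, inDpd T gamma d /\ 0 <= t <= T /\
                                y = soc etap etam xb xr d y0 t] v.
Proof.
case/andP: (hgamma) => g0 gT.
have g0' : 0 <= gamma := ltW g0.
have hD : inDpd T gamma (dstar gamma) by apply: dstar_inDpd.
case/andP: (hetap) => p0 p1.
suff [v [ts [tsr [Ev Hub]]]] : exists v ts, 0 <= ts <= T /\
    soc etap etam xb xr (dstar gamma) y0 ts = v /\
    (forall d t, inD T gamma d -> 0 <= t <= T -> soc etap etam xb xr d y0 t <= v).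
  exists v; split; split.
  - by exists (dstar gamma), ts; split; [exact: hD.1|split].
  - by move=> w [d [t [hd [ht ->]]]]; exact: Hub.
  - by exists (dstar gamma), ts; split; [exact: hD|split].
  - by move=> w [d [t [[hd _] [ht ->]]]]; exact: Hub.
have [xb0|xbn] := leP 0 xb.
  exists (y0 + etap * (xb * T + xr * gamma)), T; split; first by rewrite lexx ltW.
  split; first exact: soc_dstar_T.
  move=> d t hd ht.
  apply: (le_trans (@soc_ub R etap etam xb xr T gamma d t y0 (etap * xr) (etap * xb) g0' hd ht _ _ _)).
  - by rewrite mulr_ge0 // ltW.
  - by rewrite mulr_ge0 // ltW.
  - move=> u hu; apply: (le_trans (@gg_le_lin R etap etam xb xr hetap hetam u)).
    rewrite mulrDr lerD2l -mulrA; apply: ler_wpM2l; first exact: ltW.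
    by rewrite mulrC; apply: ler_wpM2l => //; exact: ler_norm.
  by rewrite lerD2l mulrDr !mulrA.
have [xp|xn] := ltP 0 (xb + xr).
  exists (y0 + gamma * gg R etap etam xb xr 1), gamma; split; first by rewrite g0' gT.
  split; first by apply: (@soc_dstar_le R etap etam xb xr T gamma y0 gamma); rewrite g0' lexx.
  move=> d t hd ht.
  apply: (le_trans (@soc_ub R etap etam xb xr T gamma d t y0 (etap * (xb + xr)) 0 g0' hd ht _ _ _)).
  - by rewrite mulr_ge0 // ltW.
  - by [].
  - move=> u /andP[u1 u2]; apply: (le_trans (@gg_le_lin R etap etam xb xr hetap hetam u)).
    rewrite add0r -mulrA; apply: ler_wpM2l; first exact: ltW.
    have [u0|u0] := leP 0 u.
      rewrite ger0_norm //; nra.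
    rewrite ltr0_norm //; nra.
  by rewrite lerD2l mul0r add0r gg_nonneg ?mul1r ?(ltW xp) // mulrC.
exists y0, 0; split; first by rewrite lexx ltW.
split; first by rewrite (@soc_dstar_le R etap etam xb xr T gamma y0 0) ?lexx // mul0r addr0.
move=> d t hd ht.
apply: (le_trans (@soc_ub R etap etam xb xr T gamma d t y0 0 0 g0' hd ht _ _ _)).
- by [].
- by [].
- move=> u /andP[u1 u2]; apply: (le_trans (@gg_le_lin R etap etam xb xr hetap hetam u)).
  rewrite mul0r addr0.
  have h1 : u * xr <= xr.
    by rewrite -[X in _ <= X]mul1r; apply: ler_wpM2r.
  have h : xb + u * xr <= 0 by lra.
  by rewrite mulr_ge0_le0 // ltW.
by rewrite !mul0r !addr0.
Qed.
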